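(* Let $g(s)$ be a smooth one-parameter family of Hermitian metrics compatible with a fixed complex structure $J$, and let $h=\frac{\partial}{\partial s}g(s)$. Then $$\frac{\partial}{\partial s}|T|^2=\langle h,-2Q^1+Q^2\rangle+4\langle\nabla h,T\rangle,$$ where $$\langle\nabla h,T\rangle=\frac12g^{i\bar j}g^{k\bar l}g^{m\bar n}\left(\nabla_ih_{k\bar n}T_{\bar j\bar lm}+T_{ik\bar n}\nabla_{\bar j}h_{\bar lm}\right).$$
   Context: In local holomorphic coordinates write $g_{i\bar j}$, $g^{i\bar j}$; $h_{\bar l m}=h_{m\bar l}$. The Chern connection $\nabla$ has Christoffel symbols $\Gamma_{ij}^k=g^{k\bar l}\partial_i g_{j\bar l}$ and conjugates, mixed symbols zero. Torsion $T_{ij\bar k}=\partial_i g_{j\bar k}-\partial_j g_{i\bar k}$, $T_{\bar i\bar j k}=\overline{T_{ij\bar k}}$, $|T|^2=g^{i\bar p}g^{j\bar q}g^{r\bar k}T_{ij\bar k}T_{\bar p\bar qr}$. $Q^1_{i\bar j}=g^{k\bar l}g^{m\bar n}T_{ik\bar n}T_{\bar j\bar l m}$, $Q^2_{i\bar j}=g^{k\bar l}g^{m\bar n}T_{\bar l\bar n i}T_{km\bar j}$. For $(1,1)$ tensors, $\langle h,A\rangle=h^{i\bar j}A_{i\bar j}$ with $h^{i\bar j}=g^{i\bar q}g^{p\bar j}h_{p\bar q}$. *)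

(* Defs.v *)
From HB Require Import structures.
From mathcomp Require Import all_boot all_order all_algebra.
From mathcomp Require Import all_classical all_reals all_analysis.
From mathcomp Require Import complex.
Set Implicit Arguments. Unset Strict Implicit. Unset Printing Implicit Defensive.
Import Order.TTheory GRing.Theory Num.Theory.
Import numFieldNormedType.Exports.
Local Open Scope classical_set_scope.
Local Open Scope ring_scope.

Notation Pt R n := (R * ('rV[R]_n * 'rV[R]_n))%type.

Section HermitianDefs.
Variables (R : realType) (n : nat).
Local Notation Pt := (Pt R n).

(* Parameter space: a point is (s, (x, y)) with s the family parameter and
   z_j = x_j + i y_j the local holomorphic coordinates on C^n. *)

Fixpoint Ck_on (D : set Pt) (k : nat) (f : Pt -> R) : Prop :=
  match k with
  | 0 => forall p, D p -> {for p, continuous f}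
  | k'.+1 => (forall p, D p -> differentiable f p) /\
             (forall v : Pt, Ck_on D k' (fun p => 'D_v f p))
  end.
Definition smooth_on (D : set Pt) (f : Pt -> R) := forall k, Ck_on D k f.

Definition e_s : Pt := (1, (0, 0)).
Definition e_x (j : 'I_n) : Pt := (0, (delta_mx 0 j, 0)).
Definition e_y (j : 'I_n) : Pt := (0, (0, delta_mx 0 j)).

Definition Dc (v : Pt) (f : Pt -> R[i]) (p : Pt) : R[i] :=
  Complex ('D_v (fun q => complex.Re (f q)) p) ('D_v (fun q => complex.Im (f q)) p).

Definition dz (j : 'I_n) (f : Pt -> R[i]) (p : Pt) : R[i] :=
  2^-1 * (Dc (e_x j) f p - 'i%C * Dc (e_y j) f p).
Definition dzb (j : 'I_n) (f : Pt -> R[i]) (p : Pt) : R[i] :=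
  2^-1 * (Dc (e_x j) f p + 'i%C * Dc (e_y j) f p).

Definition ds (f : Pt -> R[i]) (p : Pt) : R[i] := Dc e_s f p.

Variable g : 'I_n -> 'I_n -> Pt -> R[i].  (* g i j p = g_{i \bar j}(p) *)

(* inverse metric: g^{i \bar j}, characterised by sum_j g^{i\bar j} g_{k\bar j} = delta_ik *)
Definition ginv (p : Pt) (i j : 'I_n) : R[i] :=
  invmx (\matrix_(a, b) g a b p) j i.

Definition hh (i j : 'I_n) (p : Pt) : R[i] := ds (g i j) p.

Definition Tor (i j k : 'I_n) (p : Pt) : R[i] := dz i (g j k) p - dz j (g i k) p.
Definition Torb (i j k : 'I_n) (p : Pt) : R[i] := conjc (Tor i j k p).

Definition normT2 (p : Pt) : R[i] :=
  \sum_(i < n) \sum_(j < n) \sum_(k < n) \sum_(a < n) \sum_(b < n) \sum_(r < n)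
    ginv p i a * ginv p j b * ginv p r k * Tor i j k p * Torb a b r p.

Definition Gam (i j k : 'I_n) (p : Pt) : R[i] :=
  \sum_(l < n) ginv p k l * dz i (g j l) p.

Definition nabh (i k m : 'I_n) (p : Pt) : R[i] :=
  dz i (hh k m) p - \sum_(q < n) Gam i k q p * hh q m p.
(* nabla_{\bar j} h_{\bar l m}, with h_{\bar l m} = h_{m \bar l} and
   Gamma_{\bar j \bar l}^{\bar q} = conj (Gamma_{jl}^q) *)
Definition nabhb (j l m : 'I_n) (p : Pt) : R[i] :=
  dzb j (hh m l) p - \sum_(q < n) conjc (Gam j l q p) * hh m q p.

Definition Q1 (i j : 'I_n) (p : Pt) : R[i] :=
  \sum_(k < n) \sum_(l < n) \sum_(m < n) \sum_(a < n)
    ginv p k l * ginv p m a * Tor i k a p * Torb j l m p.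
Definition Q2 (i j : 'I_n) (p : Pt) : R[i] :=
  \sum_(k < n) \sum_(l < n) \sum_(m < n) \sum_(a < n)
    ginv p k l * ginv p m a * Torb l a i p * Tor k m j p.

Definition pair_h (A : 'I_n -> 'I_n -> R[i]) (p : Pt) : R[i] :=
  \sum_(i < n) \sum_(j < n) \sum_(a < n) \sum_(q < n)
    ginv p i q * ginv p a j * hh a q p * A i j.

Definition pair_nabh_T (p : Pt) : R[i] :=
  2^-1 * \sum_(i < n) \sum_(j < n) \sum_(k < n) \sum_(l < n) \sum_(m < n) \sum_(a < n)
    ginv p i j * ginv p k l * ginv p m a *
    (nabh i k a p * Torb j l m p + Tor i k a p * nabhb j l m p).

End HermitianDefs.

Definition smooth_hermitian_family (R : realType) (n : nat)
  (D : set (Pt R n)) (g : 'I_n -> 'I_n -> Pt R n -> R[i]) : Prop :=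
  [/\ (forall i j, smooth_on D (fun p => complex.Re (g i j p)) /\
                   smooth_on D (fun p => complex.Im (g i j p))),
      (forall p, D p -> forall i j, g i j p = conjc (g j i p)) &
      (forall p, D p -> forall v : 'I_n -> R[i], (exists j, v j != 0) ->
          0 < \sum_(i < n) \sum_(j < n) v i * g i j p * conjc (v j))].

(* Main.v *)
Require Import Defs.
From HB Require Import structures.
From mathcomp Require Import all_boot all_order all_algebra.
From mathcomp Require Import all_classical all_reals all_analysis.
From mathcomp Require Import complex.
From mathcomp Require Import ring lra.
From Stdlib Require Setoid Morphisms FunctionalExtensionality.
Import Order.TTheory GRing.Theory Num.Theory.
Import numFieldNormedType.Exports.
Local Open Scope classical_set_scope.
Local Open Scope ring_scope.
Set Implicit Arguments. Unset Strict Implicit. Unset Printing Implicit Defensive.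
Section RealD.
Variables (R : realType) (n : nat).
Local Notation Pt := (Pt R n).
Implicit Types (f g : Pt -> R) (p v : Pt).
Lemma dbD f g p v : derivable f p v -> derivable g p v -> derivable (fun q => f q + g q) p v.
Proof. move=> a b; exact: (derivableD a b). Qed.
Lemma dvD f g p v : derivable f p v -> derivable g p v ->
  'D_v (fun q => f q + g q) p = 'D_v f p + 'D_v g p.
Proof. move=> a b; exact: (deriveD a b). Qed.
Lemma dbB f g p v : derivable f p v -> derivable g p v -> derivable (fun q => f q - g q) p v.
Proof. move=> a b; exact: (derivableB a b). Qed.
Lemma dvB f g p v : derivable f p v -> derivable g p v ->
  'D_v (fun q => f q - g q) p = 'D_v f p - 'D_v g p.
Proof. move=> a b; exact: (deriveB a b). Qed.
Lemma dbM f g p v : derivable f p v -> derivable g p v -> derivable (fun q => f q * g q) p v.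
Proof. move=> a b; exact: (derivableM a b). Qed.
Lemma dvM f g p v : derivable f p v -> derivable g p v ->
  'D_v (fun q => f q * g q) p = f p * 'D_v g p + g p * 'D_v f p.
Proof. move=> a b; exact: (deriveM a b). Qed.
Lemma dbN f p v : derivable f p v -> derivable (fun q => - f q) p v.
Proof. move=> a; exact: (derivableN a). Qed.
Lemma dvN f p v : derivable f p v -> 'D_v (fun q => - f q) p = - 'D_v f p.
Proof. move=> a; exact: (deriveN a). Qed.
Lemma dbV f p v : f p != 0 -> derivable f p v -> derivable (fun q => (f q)^-1) p v.
Proof. move=> a b; exact: (derivableV a b). Qed.
Lemma dbC (c : R) p v : derivable (fun _ : Pt => c) p v.
Proof. exact: derivable_cst. Qed.
Lemma dvC (c : R) p v : 'D_v (fun _ : Pt => c) p = 0.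
Proof. exact: derive_cst. Qed.
End RealD.

Section Dcalc.
Variables (R : realType) (n : nat).
Local Notation Pt := (Pt R n).
Implicit Types (f h : Pt -> R[i]) (p v : Pt).

Definition CD v f p := derivable (fun q => complex.Re (f q)) p v /\
  derivable (fun q => complex.Im (f q)) p v.
Definition DC v f p c := CD v f p /\ Dc v f p = c.

Lemma ReM (x y : R[i]) : complex.Re (x*y) = complex.Re x * complex.Re y - complex.Im x * complex.Im y.
Proof. by case: x y => [a b] [c d]. Qed.
Lemma ImM (x y : R[i]) : complex.Im (x*y) = complex.Re x * complex.Im y + complex.Im x * complex.Re y.
Proof. by case: x y => [a b] [c d]. Qed.
Lemma ReD (x y : R[i]) : complex.Re (x+y) = complex.Re x + complex.Re y.
Proof. by case: x y => [a b] [c d]. Qed.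
Lemma ImD (x y : R[i]) : complex.Im (x+y) = complex.Im x + complex.Im y.
Proof. by case: x y => [a b] [c d]. Qed.

Lemma DC_add v p f h a b : DC v f p a -> DC v h p b ->
  DC v (fun q => f q + h q) p (a + b).
Proof.
move=> [[f1 f2] <-] [[h1 h2] <-].
have E1 : (fun q => complex.Re (f q + h q)) =
  (fun q => complex.Re (f q) + complex.Re (h q)).
  by apply/funext => q; rewrite ReD.
have E2 : (fun q => complex.Im (f q + h q)) =
  (fun q => complex.Im (f q) + complex.Im (h q)).
  by apply/funext => q; rewrite ImD.
split; first by rewrite /CD E1 E2; split; [exact: dbD f1 h1|exact: dbD f2 h2].
by rewrite /Dc E1 E2 (dvD f1 h1) (dvD f2 h2).
Qed.

Lemma DC_mul v p f h a b : DC v f p a -> DC v h p b ->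
  DC v (fun q => f q * h q) p (a * h p + f p * b).
Proof.
move=> [[f1 f2] <-] [[h1 h2] <-].
have E1 : (fun q => complex.Re (f q * h q)) =
  (fun q => complex.Re (f q) * complex.Re (h q) - complex.Im (f q) * complex.Im (h q)).
  by apply/funext => q; rewrite ReM.
have E2 : (fun q => complex.Im (f q * h q)) =
  (fun q => complex.Re (f q) * complex.Im (h q) + complex.Im (f q) * complex.Re (h q)).
  by apply/funext => q; rewrite ImM.
have a1 := dbM f1 h1; have a2 := dbM f2 h2; have a3 := dbM f1 h2; have a4 := dbM f2 h1.
split; first by rewrite /CD E1 E2; split; [exact: dbB a1 a2|exact: dbD a3 a4].
rewrite /Dc E1 E2 (dvB a1 a2) (dvD a3 a4) (dvM f1 h1) (dvM f2 h2) (dvM f1 h2) (dvM f2 h1).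
move: (f p) (h p) => [x1 y1] [x2 y2] /=.
apply/eqP; rewrite eq_complex /=; apply/andP; split; apply/eqP; ring.
Qed.

Lemma DC_cst v p (c : R[i]) : DC v (fun _ => c) p 0.
Proof.
split; first by split; apply: dbC.
by rewrite /Dc !dvC.
Qed.

Lemma DC_conj v p f a : DC v f p a -> DC v (fun q => conjc (f q)) p (conjc a).
Proof.
move=> [[f1 f2] <-].
have E1 : (fun q => complex.Re (conjc (f q))) = (fun q => complex.Re (f q)).
  by apply/funext => q; case: (f q).
have E2 : (fun q => complex.Im (conjc (f q))) = (fun q => - complex.Im (f q)).
  by apply/funext => q; case: (f q).
split; first by rewrite /CD E1 E2; split; [exact: f1|exact: dbN f2].
by rewrite /Dc E1 E2 (dvN f2).
Qed.

Lemma DC_near v p f h a : (\forall q \near p, f q = h q) -> DC v f p a -> DC v h p a.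
Proof.
move=> fh [[f1 f2] <-].
have e1 : \forall q \near p, complex.Re (f q) = complex.Re (h q).
  by apply: filterS fh => q ->.
have e2 : \forall q \near p, complex.Im (f q) = complex.Im (h q).
  by apply: filterS fh => q ->.
split; first by split; [exact: near_eq_derivable e1 f1|exact: near_eq_derivable e2 f2].
by rewrite /Dc (near_eq_derive _ e1) (near_eq_derive _ e2).
Qed.

Lemma DC_sum v p m (F : 'I_m -> Pt -> R[i]) (c : 'I_m -> R[i]) :
  (forall i, DC v (F i) p (c i)) ->
  DC v (fun q => \sum_(i < m) F i q) p (\sum_(i < m) c i).
Proof.
elim: m F c => [|m IH] F c H.
  have -> : (fun q => \sum_(i < 0) F i q) = (fun _ => 0).
    by apply/funext => q; rewrite big_ord0.
  by rewrite big_ord0; apply: DC_cst.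
have -> : (fun q => \sum_(i < m.+1) F i q) =
   (fun q => \sum_(i < m) F (widen_ord (leqnSn m) i) q + F ord_max q).
  by apply/funext => q; rewrite big_ord_recr.
rewrite big_ord_recr; apply: DC_add => //.
exact: (IH (fun i => F (widen_ord (leqnSn m) i)) (fun i => c (widen_ord (leqnSn m) i))).
Qed.

Lemma DC_val v p f a b : DC v f p a -> a = b -> DC v f p b.
Proof. by move=> H <-. Qed.

Lemma DC_scal v p (k : R[i]) f a : DC v f p a -> DC v (fun q => k * f q) p (k * a).
Proof.
move=> H; apply: DC_val (DC_mul (DC_cst v p k) H) _.
by rewrite mul0r add0r.
Qed.

Lemma CD_inv v p f : CD v f p -> f p != 0 -> CD v (fun q => (f q)^-1) p.
Proof.
move=> [f1 f2] fp0.
pose N := fun q => complex.Re (f q) * complex.Re (f q) + complex.Im (f q) * complex.Im (f q).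
have N0 : N p != 0.
  move: fp0; rewrite /N /=; case: (f p) => [a b] ab0.
  rewrite /= -!expr2 paddr_eq0 ?sqr_ge0 // !sqrf_eq0.
  by apply: contra ab0 => /andP[/eqP a0 /eqP b0]; rewrite a0 b0.
have dN : derivable N p v by apply: dbD; apply: dbM.
have dV := dbV N0 dN.
have E1 : (fun q => complex.Re ((f q)^-1)) = (fun q => complex.Re (f q) * (N q)^-1).
  by apply/funext => q; rewrite /N /=; case: (f q) => a b /=; rewrite !expr2.
have E2 : (fun q => complex.Im ((f q)^-1)) = (fun q => - (complex.Im (f q) * (N q)^-1)).
  apply/funext => q; rewrite /N /=; case: (f q) => a b /=.
  by rewrite !expr2.
rewrite /CD E1 E2; split; last apply: dbN; exact: dbM.
Qed.

End Dcalc.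

Section Schwarz.
Variables (R : realType) (V : normedModType R).
Implicit Types (G : V -> R) (a v : V).

Lemma line_der G a v (th : R) : derivable G (a + th *: v) v ->
  derivable (fun s : R => G (a + s *: v)) th 1 /\
  derive (fun s : R => G (a + s *: v)) th 1 = derive G (a + th *: v) v.
Proof.
have E : (fun h : R => h^-1 *: (((fun s : R => G (a + s *: v)) \o shift th) (h *: 1) - G (a + th *: v)))
  = (fun h => h^-1 *: ((G \o shift (a + th *: v)) (h *: v) - G (a + th *: v))).
  apply/funext => h /=; congr (_ *: (G _ - _)).
  by rewrite [h *: 1]mulr1 scalerDl addrCA.
by rewrite /derivable /derive E.
Qed.

End Schwarz.

Section Schwarz2.
Variables (R : realType) (V : normedModType R).
Implicit Types (G : V -> R) (a v : V).

Lemma is_derive_line G a v (th : R) : derivable G (a + th *: v) v ->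
  is_derive th 1 (fun s : R => G (a + s *: v)) (derive G (a + th *: v) v).
Proof. by move=> /line_der [h1 h2]; apply: DeriveDef. Qed.

Lemma mvt2 G (u w p : V) (rho t : R) :
  0 < t -> t * (`|u| + `|w|) < rho ->
  (forall q, `|p - q| < rho -> derivable G q u /\ derivable (fun x => derive G x u) q w) ->
  exists q, `|p - q| <= t * (`|u| + `|w|) /\
   G (p + t*:u + t*:w) - G (p + t*:u) - G (p + t*:w) + G p =
     t ^+ 2 * derive (fun x => derive G x u) q w.
Proof.
move=> t0 tr H.
have bnd : forall th s, 0 <= th <= t -> 0 <= s <= t ->
    `|p - (p + th*:u + s*:w)| <= t * (`|u| + `|w|).
  move=> th s /andP[th0 tht] /andP[s0 st].
  rewrite -addrA opprD addrA subrr sub0r normrN.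
  apply: le_trans (ler_normD _ _) _.
  rewrite !normrZ !ger0_norm // mulrDr.
  by apply: lerD; apply: ler_wpM2r.
have inb : forall th s, 0 <= th <= t -> 0 <= s <= t ->
    `|p - (p + th*:u + s*:w)| < rho.
  by move=> th s h1 h2; apply: le_lt_trans (bnd _ _ h1 h2) tr.
have t0' : 0 <= t <= t by apply/andP; split; [exact: ltW|exact: lexx].
have z0 : (0:R) <= 0 <= t by apply/andP; split; [exact: lexx|exact: ltW].
pose a1 := p + t*:w.
pose psi := fun th : R => G (a1 + th*:u) - G (p + th*:u).
pose dpsi := fun th : R => derive G (a1 + th*:u) u - derive G (p + th*:u) u.
have Dpsi : forall th, 0 <= th <= t -> is_derive th 1 psi (dpsi th).
  move=> th hth.
  have h1 : derivable G (a1 + th*:u) u.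
    by have := (H _ (inb _ _ hth t0')).1; rewrite /a1 addrAC.
  have h2 : derivable G (p + th*:u) u.
    by have := (H _ (inb _ _ hth z0)).1; rewrite scale0r addr0.
  have k1 := is_derive_line h1; have k2 := is_derive_line h2.
  exact: is_deriveB.
have [c cI Hc] : exists2 c, c \in `]0, t[ & psi t - psi 0 = dpsi c * (t - 0).
  apply: (@MVT R psi dpsi 0 t t0).
    move=> x; rewrite in_itv /= => /andP[x0 xt]; apply: Dpsi.
    by rewrite !ltW.
  apply: derivable_within_continuous => x; rewrite in_itv /= => hx.
  by have [] := Dpsi _ hx.
have cI' : 0 <= c <= t by move: cI; rewrite in_itv /= => /andP[h1 h2]; rewrite !ltW.
pose b := p + c*:u.
pose chi := fun s : R => derive G (b + s*:w) u.
pose dchi := fun s : R => derive (fun x => derive G x u) (b + s*:w) w.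
have Dchi : forall s, 0 <= s <= t -> is_derive s 1 chi (dchi s).
  move=> s hs; apply: is_derive_line.
  exact: (H _ (inb _ _ cI' hs)).2.
have [d dI Hd] : exists2 d, d \in `]0, t[ & chi t - chi 0 = dchi d * (t - 0).
  apply: (@MVT R chi dchi 0 t t0).
    move=> x; rewrite in_itv /= => /andP[x0 xt]; apply: Dchi.
    by rewrite !ltW.
  apply: derivable_within_continuous => x; rewrite in_itv /= => hx.
  by have [] := Dchi _ hx.
have dI' : 0 <= d <= t by move: dI; rewrite in_itv /= => /andP[h1 h2]; rewrite !ltW.
exists (b + d*:w); split; first exact: bnd.
have E1 : dpsi c = chi t - chi 0.
  by rewrite /dpsi /chi /b /a1 scale0r addr0 addrAC.
move: Hc Hd; rewrite /psi /a1 !scale0r !addr0 subr0 E1 => Hc Hd.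
rewrite (addrAC p (t *: w)) in Hc.
idtac.
rewrite Hd in Hc; rewrite (_ : forall x y z w : R, x - y - z + w = x - y - (z - w)); last by move=> *; ring.
by rewrite Hc /dchi; ring.
Qed.

End Schwarz2.

Section Schwarz3.
Variables (R : realType) (V : normedModType R).
Implicit Types (G : V -> R).

Lemma near_norm_ball (p : V) (P : V -> Prop) :
  (\forall q \near p, P q) -> exists2 d : R, 0 < d & forall q, `|p - q| < d -> P q.
Proof.
move=> /nbhs_normP [d d0 Hd]; exists d => // q hq; apply: Hd.
Qed.

Lemma schwarz G (u w p : V) (rho : R) : 0 < rho ->
 (forall q, `|p - q| < rho -> derivable G q u /\ derivable G q w /\
    derivable (fun x => derive G x u) q w /\ derivable (fun x => derive G x w) q u) ->
 {for p, continuous (fun x => derive (fun y => derive G y u) x w)} ->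
 {for p, continuous (fun x => derive (fun y => derive G y w) x u)} ->
 derive (fun y => derive G y w) p u = derive (fun y => derive G y u) p w.
Proof.
move=> rho0 H cX cY.
apply/eqP; rewrite -subr_eq0 -normr_le0; apply/ler_addgt0Pr => e e0; rewrite add0r.
have e2 : 0 < e / 2 by rewrite divr_gt0.
have [d1 d10 H1] := near_norm_ball (cvgr_dist_lt _ _ cX _ e2).
have [d2 d20 H2] := near_norm_ball (cvgr_dist_lt _ _ cY _ e2).
pose m := Num.min rho (Num.min d1 d2).
have m0 : 0 < m by rewrite /m !lt_min rho0 d10 d20.
pose K := `|u| + `|w| + 1.
have K0 : 0 < K by rewrite /K ltr_pwDr // addr_ge0.
pose t := m / (2 * K).
have t0 : 0 < t by rewrite /t divr_gt0 // mulr_gt0.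
have tK : t * (`|u| + `|w|) < m.
  have h1 : t * (`|u| + `|w|) <= t * K by rewrite ler_pM2l // /K lerDl.
  have h2 : t * K = m / 2 by rewrite /t; field; rewrite gt_eqF.
  apply: le_lt_trans h1 _; rewrite h2.
  by rewrite ltr_pdivrMr // ltr_pMr // ltr1n.
have tr : t * (`|u| + `|w|) < rho by apply: lt_le_trans tK _; rewrite /m ge_min lexx.
have td1 : t * (`|u| + `|w|) < d1.
  by apply: lt_le_trans tK _; rewrite /m !ge_min lexx orbT.
have td2 : t * (`|u| + `|w|) < d2.
  by apply: lt_le_trans tK _; rewrite /m !ge_min lexx !orbT.
have [q1 [hq1 E1]] := mvt2 t0 tr (fun q hq => let: conj a (conj _ (conj c _)) := H q hq in conj a c).
have tr' : t * (`|w| + `|u|) < rho by rewrite addrC.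
have [q2 [hq2 E2]] := mvt2 t0 tr' (fun q hq => let: conj _ (conj b (conj _ d)) := H q hq in conj b d).
have XY : derive (fun y => derive G y u) q1 w = derive (fun y => derive G y w) q2 u.
  have E3 : p + t *: w + t *: u = p + t *: u + t *: w by rewrite addrAC.
  rewrite E3 in E2.
  have tn0 : t ^+ 2 != 0 by rewrite expf_neq0 // gt_eqF.
  have D : G (p + t*:u + t*:w) - G (p + t*:u) - G (p + t*:w) + G p =
     G (p + t *: u + t *: w) - G (p + t *: w) - G (p + t *: u) + G p.
    by congr (_ + _); exact: addrAC.
  exact: (mulfI tn0 (etrans (esym E1) (etrans D E2))).
have n1 : `|derive (fun y => derive G y u) p w - derive (fun y => derive G y u) q1 w| < e / 2 by apply: H1; apply: le_lt_trans hq1 td1.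
have n2 : `|derive (fun y => derive G y w) p u - derive (fun y => derive G y w) q2 u| < e / 2.
  by apply: H2; rewrite [`|w| + _]addrC in hq2; apply: le_lt_trans hq2 td2.
rewrite -XY in n2.
set a := derive (fun y => derive G y w) p u in n2 *.
set b := derive (fun y => derive G y u) p w in n1 *.
set c := derive (fun y => derive G y u) q1 w in n1 n2 *.
rewrite (_ : a - b = (a - c) - (b - c)); last by rewrite opprB addrA subrK.
apply: le_trans (ler_normB _ _) (ltW _).
rewrite [X in _ < X]splitr; exact: ltrD n2 n1.
Qed.

End Schwarz3.


Section Big.
Variables (R : realType) (n : nat).
Local Notation Pt := (Pt R n).
Implicit Types (f h : Pt -> R[i]) (p v : Pt).

Lemma CD_DC v p f : CD v f p -> DC v f p (Dc v f p).
Proof. by []. Qed.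

Lemma DC_ext v p f h a : (forall q, f q = h q) -> DC v f p a -> DC v h p a.
Proof. by move=> E; rewrite (_ : h = f) //; apply/funext => q; rewrite E. Qed.

Lemma CD_ext v p f h : (forall q, f q = h q) -> CD v f p -> CD v h p.
Proof. by move=> E; rewrite (_ : h = f) //; apply/funext => q; rewrite E. Qed.

Lemma CD_cst v p (c : R[i]) : CD v (fun _ => c) p.
Proof. exact: (DC_cst v p c).1. Qed.

Lemma CD_big_sum v p (I : Type) (r : seq I) (P : pred I) (F : I -> Pt -> R[i]) :
  (forall i, P i -> CD v (F i) p) -> CD v (fun q => \sum_(i <- r | P i) F i q) p.
Proof.
move=> H; elim: r => [|x r IH].
  by apply: CD_ext (CD_cst v p 0) => q; rewrite big_nil.
case Px: (P x).
  apply: CD_ext ((DC_add (CD_DC (H x Px)) (CD_DC IH)).1) => q.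
  by rewrite big_cons Px.
by apply: CD_ext IH => q; rewrite big_cons Px.
Qed.

Lemma CD_big_prod v p (I : Type) (r : seq I) (P : pred I) (F : I -> Pt -> R[i]) :
  (forall i, P i -> CD v (F i) p) -> CD v (fun q => \prod_(i <- r | P i) F i q) p.
Proof.
move=> H; elim: r => [|x r IH].
  by apply: CD_ext (CD_cst v p 1) => q; rewrite big_nil.
case Px: (P x).
  apply: CD_ext ((DC_mul (CD_DC (H x Px)) (CD_DC IH)).1) => q.
  by rewrite big_cons Px.
by apply: CD_ext IH => q; rewrite big_cons Px.
Qed.

Lemma CD_mul v p f h : CD v f p -> CD v h p -> CD v (fun q => f q * h q) p.
Proof. by move=> a b; exact: (DC_mul (CD_DC a) (CD_DC b)).1. Qed.

Lemma CD_det v p m (A : Pt -> 'M[R[i]]_m) :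
  (forall a b, CD v (fun q => A q a b) p) -> CD v (fun q => \det (A q)) p.
Proof.
move=> H; rewrite /determinant; apply: CD_big_sum => s _.
apply: CD_mul; first exact: CD_cst.
by apply: CD_big_prod => i _; apply: H.
Qed.

Lemma CD_cofactor v p m (A : Pt -> 'M[R[i]]_m) i j :
  (forall a b, CD v (fun q => A q a b) p) -> CD v (fun q => cofactor (A q) i j) p.
Proof.
move=> H; rewrite /cofactor; apply: CD_mul; first exact: CD_cst.
apply: CD_det => a b; apply: CD_ext (H (lift i a) (lift j b)) => q.
by rewrite !mxE.
Qed.

End Big.


Section Gen2.
Variables (R : realType) (n : nat).
Local Notation Pt := (Pt R n).
Implicit Types (f h : Pt -> R[i]) (p v : Pt).

Lemma DC_sub v p f h a b : DC v f p a -> DC v h p b ->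
  DC v (fun q => f q - h q) p (a - b).
Proof.
move=> Hf Hh; have := DC_add Hf (DC_scal (-1) Hh).
by rewrite mulN1r; apply: DC_ext => q; rewrite mulN1r.
Qed.

Lemma Dc_near v p f h : (\forall q \near p, f q = h q) -> Dc v f p = Dc v h p.
Proof.
move=> fh.
have e1 : \forall q \near p, complex.Re (f q) = complex.Re (h q).
  by apply: filterS fh => q ->.
have e2 : \forall q \near p, complex.Im (f q) = complex.Im (h q).
  by apply: filterS fh => q ->.
by rewrite /Dc (near_eq_derive _ e1) (near_eq_derive _ e2).
Qed.

Lemma CD_near v p f h : (\forall q \near p, f q = h q) -> CD v f p -> CD v h p.
Proof. by move=> fh hf; exact: (DC_near fh (CD_DC hf)).1. Qed.

Lemma DC_uniq v p f a b : DC v f p a -> DC v f p b -> a = b.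
Proof. by move=> [_ <-] [_ <-]. Qed.

Lemma conj_i : conjc ('i%C : R[i]) = - 'i%C.
Proof. by apply/eqP; rewrite eq_complex /= oppr0 !eqxx. Qed.

Lemma dzb_conj j f p : CD (e_x R j) f p -> CD (e_y R j) f p ->
  dzb j (fun q => conjc (f q)) p = conjc (dz j f p).
Proof.
move=> h1 h2; rewrite /dzb /dz (DC_conj (CD_DC h1)).2 (DC_conj (CD_DC h2)).2.
rewrite rmorphM rmorphB rmorphM fmorphV rmorph_nat; congr (_ * _).
move: (Dc (e_x R j) f p) (Dc (e_y R j) f p) => [a b] [c d].
by apply/eqP; rewrite eq_complex /=; apply/andP; split; apply/eqP; ring.
Qed.

End Gen2.

Section Spec.
Variables (R : realType) (n : nat) (D : set (Pt R n)).
Variable (g : 'I_n -> 'I_n -> Pt R n -> R[i]).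
Hypotheses (oD : open D) (Hg : smooth_hermitian_family D g).
Local Notation Pt := (Pt R n).

Lemma nearD q : D q -> \forall x \near q, D x.
Proof. by move=> Dq; apply: oD. Qed.

Section Smooth.
Variable F : Pt -> R.
Hypothesis sF : smooth_on D F.

Lemma sm_der q v : D q -> derivable F q v.
Proof. by move=> Dq; have [h _] := sF 1; apply: diff_derivable; apply: h. Qed.

Lemma sm_der2 q v w : D q -> derivable (fun x => derive F x w) q v.
Proof.
move=> Dq; have [_ h] := sF 2; have [h1 _] := h w.
by apply: diff_derivable; apply: h1.
Qed.

Lemma sm_cont2 q u w : D q ->
  {for q, continuous (fun x => derive (fun y => derive F y u) x w)}.
Proof.
move=> Dq; have [_ h] := sF 2; have [_ h1] := h u.
exact: (h1 w q Dq).
Qed.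

Lemma sm_schwarz q u w : D q ->
  derive (fun y => derive F y w) q u = derive (fun y => derive F y u) q w.
Proof.
move=> Dq; have [rho rho0 Hr] := near_norm_ball (nearD Dq).
apply: (schwarz rho0); [move=> x hx| exact: sm_cont2 | exact: sm_cont2].
have Dx := Hr x hx.
split; first exact: sm_der.
split; first exact: sm_der.
by split; apply: sm_der2.
Qed.

End Smooth.

Lemma sm_g i j : smooth_on D (fun q => complex.Re (g i j q)) /\
  smooth_on D (fun q => complex.Im (g i j q)).
Proof. by case: Hg => H _ _; apply: H. Qed.

Lemma herm q i j : D q -> g i j q = conjc (g j i q).
Proof. by case: Hg => _ H _ Dq; apply: H. Qed.

Lemma CD_g v q i j : D q -> CD v (g i j) q.
Proof. by move=> Dq; have [a b] := sm_g i j; split; apply: sm_der. Qed.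

Lemma CD_hh v q i j : D q -> CD v (hh g i j) q.
Proof. by move=> Dq; have [a b] := sm_g i j; split; apply: sm_der2. Qed.

Lemma DcE (v : Pt) (f : Pt -> R[i]) (q : Pt) : Dc v f q = Complex (derive (fun x => complex.Re (f x)) q v)
  (derive (fun x => complex.Im (f x)) q v).
Proof. by []. Qed.
Lemma ReDc (v : Pt) (f : Pt -> R[i]) : (fun x => complex.Re (Dc v f x)) = (fun x => derive (fun y => complex.Re (f y)) x v).
Proof. by apply/funext. Qed.
Lemma ImDc (v : Pt) (f : Pt -> R[i]) : (fun x => complex.Im (Dc v f x)) = (fun x => derive (fun y => complex.Im (f y)) x v).
Proof. by apply/funext. Qed.

Lemma DC_Dcw q w i j : D q ->
  DC (e_s R n) (fun x => Dc w (g i j) x) q (Dc w (hh g i j) q).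
Proof.
move=> Dq; have [a b] := sm_g i j.
split; first by split; apply: sm_der2.
rewrite /hh /ds [LHS]DcE [RHS]DcE.
have e1 : derive (fun x => complex.Re (Dc w (g i j) x)) q (e_s R n) = derive (fun x => derive (fun y => complex.Re (g i j y)) x w) q (e_s R n) := erefl.
have e2 := sm_schwarz a (e_s R n) w Dq.
have e3 : derive (fun x => complex.Im (Dc w (g i j) x)) q (e_s R n) = derive (fun x => derive (fun y => complex.Im (g i j y)) x w) q (e_s R n) := erefl.
have e4 := sm_schwarz b (e_s R n) w Dq.
have e5 := f_equal2 (@Complex R) (etrans e1 e2) (etrans e3 e4).
exact e5.
Qed.

Lemma DC_dz q k i j : D q ->
  DC (e_s R n) (fun x => dz k (g i j) x) q (dz k (hh g i j) q).
Proof.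
move=> Dq; rewrite /dz.
have := DC_scal (2^-1) (DC_sub (DC_Dcw (e_x R k) i j Dq)
  (DC_scal 'i%C (DC_Dcw (e_y R k) i j Dq))).
by apply: DC_ext.
Qed.

Definition Xt p i j k := dz i (hh g j k) p.

Lemma DC_Tor q i j k : D q ->
  DC (e_s R n) (fun x => Tor g i j k x) q (Xt q i j k - Xt q j i k).
Proof. by move=> Dq; exact: DC_sub (DC_dz i j k Dq) (DC_dz j i k Dq). Qed.

Lemma DC_Torb q i j k : D q ->
  DC (e_s R n) (fun x => Torb g i j k x) q (conjc (Xt q i j k - Xt q j i k)).
Proof. by move=> Dq; exact: DC_conj (DC_Tor i j k Dq). Qed.

Lemma hh_herm q i j : D q -> hh g i j q = conjc (hh g j i q).
Proof.
move=> Dq; rewrite /hh /ds.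
rewrite (Dc_near (e_s R n) (h := fun x => conjc (g j i x))).
  exact: (DC_conj (CD_DC (CD_g (e_s R n) j i Dq))).2.
by apply: filterS (nearD Dq) => x Dx; apply: herm.
Qed.

Lemma Xb_conj q j m l : D q -> dzb j (hh g m l) q = conjc (dz j (hh g l m) q).
Proof.
move=> Dq; rewrite -dzb_conj; try exact: CD_hh.
rewrite /dzb (Dc_near (e_x R j) (f := hh g m l) (h := fun x => conjc (hh g l m x))).
  rewrite (Dc_near (e_y R j) (f := hh g m l) (h := fun x => conjc (hh g l m x))) //.
  by apply: filterS (nearD Dq) => x Dx; apply: hh_herm.
by apply: filterS (nearD Dq) => x Dx; apply: hh_herm.
Qed.

End Spec.


Section Ginv.
Variables (R : realType) (n : nat) (D : set (Pt R n)).
Variable (g : 'I_n -> 'I_n -> Pt R n -> R[i]).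
Hypotheses (oD : open D) (Hg : smooth_hermitian_family D g).
Local Notation Pt := (Pt R n).

Definition Mq (q : Pt) : 'M[R[i]]_n := \matrix_(a, b) g a b q.

Lemma Mq_unit q : D q -> Mq q \in unitmx.
Proof.
move=> Dq; rewrite unitmxE unitfE; apply/negP => /det0P [v v0 vM].
case: Hg => _ _ /(_ q Dq (fun i => v 0 i)) H.
have [j vj] : exists j, v 0 j != 0.
  apply/existsP; apply: contraR v0; rewrite negb_exists => /forallP H0.
  apply/eqP/rowP => j; rewrite mxE; apply/eqP.
  by move: (H0 j); rewrite negbK.
have := H (ex_intro _ j vj).
rewrite exchange_big /=.
rewrite (eq_bigr (fun j => 0)) ?big1 ?ltxx // => k _.
rewrite -mulr_suml.
have := congr1 (fun A : 'rV_n => A 0 k) vM; rewrite !mxE => E.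
rewrite (eq_bigr (fun i => v 0 i * Mq q i k)); first by rewrite E mul0r.
by move=> i _; rewrite mxE.
Qed.

Lemma ginv_E q i j : D q ->
  ginv g q i j = (\det (Mq q))^-1 * cofactor (Mq q) i j.
Proof.
move=> Dq; rewrite /ginv -/(Mq q) /invmx (Mq_unit Dq) !mxE.
by [].
Qed.

Lemma CD_ginv v p i j : D p -> CD v (fun q => ginv g q i j) p.
Proof.
move=> Dp.
have ent : forall a b, CD v (fun q => Mq q a b) p.
  move=> a b; apply: CD_ext (CD_g Hg v a b Dp) => q; by rewrite mxE.
have d0 : \det (Mq p) != 0 by rewrite -unitfE -unitmxE Mq_unit.
apply: (CD_near (f := fun q => (\det (Mq q))^-1 * cofactor (Mq q) i j)).
  by apply: filterS (nearD oD Dp) => q Dq; rewrite ginv_E.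
apply: CD_mul; last exact: CD_cofactor.
exact: CD_inv (CD_det ent) d0.
Qed.

Lemma ginv_id q i k : D q ->
  \sum_(j < n) ginv g q i j * g k j q = (1%:M : 'M[R[i]]_n) k i.
Proof.
move=> Dq; rewrite -(mulmxV (Mq_unit Dq)) mxE.
by apply: eq_bigr => j _; rewrite mulrC /Mq mxE.
Qed.

Definition dG p i j := Dc (e_s R n) (fun q => ginv g q i j) p.

Lemma dG_eq p i k : D p ->
  \sum_(j < n) (dG p i j * g k j p + ginv g p i j * hh g k j p) = 0.
Proof.
move=> Dp.
have H1 : DC (e_s R n) (fun q => \sum_(j < n) ginv g q i j * g k j q) p
   (\sum_(j < n) (dG p i j * g k j p + ginv g p i j * hh g k j p)).
  apply: DC_sum => j; apply: DC_mul; first exact: CD_DC (CD_ginv _ _ _ Dp).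
  by split; [exact: (CD_g Hg _ _ _ Dp) | by []].
have H2 : DC (e_s R n) (fun q => \sum_(j < n) ginv g q i j * g k j q) p 0.
  apply: (DC_near (f := fun _ => (1%:M : 'M[R[i]]_n) k i)); last exact: DC_cst.
  by apply: filterS (nearD oD Dp) => q Dq; rewrite ginv_id.
exact: DC_uniq H1 H2.
Qed.

Lemma solve_lin (M Y H : 'M[R[i]]_n) : M \in unitmx ->
  M *m Y = - (H *m invmx M) -> Y = - (invmx M *m H *m invmx M).
Proof.
move=> uM E.
have : invmx M *m (M *m Y) = invmx M *m (- (H *m invmx M)) by rewrite E.
by rewrite mulmxA mulVmx // mul1mx mulmxN mulmxA.
Qed.

Lemma dG_val p i j : D p ->
  dG p i j = - \sum_(a < n) \sum_(b < n) ginv g p a j * hh g a b p * ginv g p i b.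
Proof.
move=> Dp.
pose N := invmx (Mq p).
pose Y : 'M[R[i]]_n := \matrix_(j, i) dG p i j.
pose H : 'M[R[i]]_n := \matrix_(a, b) hh g a b p.
have E : Mq p *m Y = - (H *m N).
  apply/eqP; rewrite -subr_eq0 opprK; apply/eqP/matrixP => k i'.
  rewrite !mxE -big_split /= -[RHS](dG_eq i' k Dp).
  apply: eq_bigr => j' _; rewrite /Y /H /Mq !mxE.
  by rewrite mulrC [hh g k j' p * _]mulrC.
have E2 : Y = - (N *m H *m N) := solve_lin (Mq_unit Dp) E.
have := congr1 (fun A : 'M[R[i]]_n => A j i) E2.
rewrite !mxE => ->; congr (- _).
rewrite (eq_bigr (fun b => \sum_(a < n) ginv g p a j * hh g a b p * ginv g p i b)).
  by rewrite exchange_big.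
move=> b _; rewrite !mxE mulr_suml; apply: eq_bigr => a _.
by rewrite !mxE.
Qed.

Lemma DC_ginv p i j : D p ->
  DC (e_s R n) (fun q => ginv g q i j) p
    (- \sum_(a < n) \sum_(b < n) ginv g p a j * hh g a b p * ginv g p i b).
Proof. by move=> Dp; split; [exact: CD_ginv | exact: dG_val]. Qed.

End Ginv.


#[export] Instance bigop_proper_eq (R0 : Type) (I : Type) (idx : R0) (r : seq I):
  Morphisms.Proper (Morphisms.respectful (Morphisms.pointwise_relation I eq) eq) (@bigop R0 I idx r).
Proof.
move=> F G HFG; have -> // : F = G.
exact: (FunctionalExtensionality.functional_extensionality _ _ HFG).
Qed.

Ltac sw0 := rewrite exchange_big /=.
Ltac sw1 := under eq_bigr => ? _ do rewrite exchange_big.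
Ltac sw2 := under eq_bigr => ? _ do under eq_bigr => ? _ do rewrite exchange_big.
Ltac sw3 := under eq_bigr => ? _ do under eq_bigr => ? _ do under eq_bigr => ? _ do rewrite exchange_big.
Ltac sw4 := under eq_bigr => ? _ do under eq_bigr => ? _ do under eq_bigr => ? _ do under eq_bigr => ? _ do rewrite exchange_big.
Ltac sw5 := under eq_bigr => ? _ do under eq_bigr => ? _ do under eq_bigr => ? _ do under eq_bigr => ? _ do under eq_bigr => ? _ do rewrite exchange_big.
Ltac sw6 := under eq_bigr => ? _ do under eq_bigr => ? _ do under eq_bigr => ? _ do under eq_bigr => ? _ do under eq_bigr => ? _ do under eq_bigr => ? _ do rewrite exchange_big.

Lemma sumrD' (C : comRingType) (I : Type) (r : seq I) (P : pred I) (F1 F2 : I -> C) :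
  \sum_(i <- r | P i) (F1 i + F2 i) = \sum_(i <- r | P i) F1 i + \sum_(i <- r | P i) F2 i.
Proof. exact: big_split. Qed.

Section Reo.
Variables (C : comRingType) (n : nat).
Local Notation I := 'I_n.

Lemma reo_I1 (F : I -> I -> I -> I -> I -> I -> I -> I -> C) :
  \sum_i \sum_j \sum_k \sum_a \sum_b \sum_r \sum_al \sum_be F i j k a b r al be =
  \sum_i \sum_a \sum_al \sum_be \sum_j \sum_b \sum_r \sum_k F i j k a b r al be.
Proof.
sw2. sw1. sw5. sw4. sw3. sw2. sw6. sw5. sw4. sw3. sw5. sw6.
by [].
Qed.

Lemma reo_I3 (F : I -> I -> I -> I -> I -> I -> I -> I -> C) :
  \sum_i \sum_j \sum_k \sum_a \sum_b \sum_r \sum_al \sum_be F i j k a b r al be =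
  \sum_r \sum_k \sum_al \sum_be \sum_i \sum_a \sum_j \sum_b F i j k a b r al be.
Proof. sw4. sw3. sw2. sw1. sw0. sw2. sw1. sw5. sw4. sw3. sw2. sw6. sw5. sw4. sw3. sw5. by []. Qed.

Lemma reo_I4 (F : I -> I -> I -> I -> I -> I -> I -> I -> C) :
  \sum_i \sum_j \sum_k \sum_a \sum_b \sum_r \sum_q \sum_l F i j k a b r q l =
  \sum_r \sum_l \sum_q \sum_k \sum_i \sum_a \sum_j \sum_b F i j k a b r q l.
Proof. sw4. sw3. sw2. sw1. sw0. sw6. sw5. sw4. sw3. sw2. sw1. sw6. sw5. sw4. sw3. sw2. sw4. sw3. sw5. by []. Qed.

Lemma reo_I5 (F : I -> I -> I -> I -> I -> I -> I -> I -> C) :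
  \sum_i \sum_j \sum_k \sum_a \sum_b \sum_r \sum_q \sum_l F i j k a b r q l =
  \sum_l \sum_k \sum_r \sum_q \sum_i \sum_a \sum_j \sum_b F i j k a b r q l.
Proof. sw6. sw5. sw4. sw3. sw2. sw1. sw0. sw2. sw1. sw5. sw4. sw3. sw2. sw6. sw5. sw4. sw3. sw5. by []. Qed.

Lemma reo_N (F : I -> I -> I -> I -> I -> I -> C) :
  \sum_i \sum_j \sum_k \sum_a \sum_b \sum_r F i j k a b r =
  \sum_i \sum_a \sum_j \sum_b \sum_r \sum_k F i j k a b r.
Proof. sw2. sw1. sw3. sw4. by []. Qed.


End Reo.

Section Alg.
Variables (C : comRingType) (n : nat).
Local Notation I := 'I_n.
Variables (G H : I -> I -> C) (T Tb : I -> I -> I -> C).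
Hypothesis TA : forall i j k, T j i k = - T i j k.
Hypothesis TbA : forall i j k, Tb j i k = - Tb i j k.

Definition Ka i a := \sum_(al < n) \sum_(be < n) G al a * H al be * G i be.
Definition Q1a i j := \sum_(k < n) \sum_(l < n) \sum_(m < n) \sum_(a < n)
    G k l * G m a * T i k a * Tb j l m.
Definition Q2a i j := \sum_(k < n) \sum_(l < n) \sum_(m < n) \sum_(a < n)
    G k l * G m a * Tb l a i * T k m j.
Definition PHa (A : I -> I -> C) := \sum_(i < n) \sum_(j < n) \sum_(a < n) \sum_(q < n)
    G i q * G a j * H a q * A i j.

Lemma I1 : \sum_(i < n) \sum_(j < n) \sum_(k < n) \sum_(a < n) \sum_(b < n) \sum_(r < n)
   (Ka i a * G j b * G r k * T i j k * Tb a b r) = PHa Q1a.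
Proof.
rewrite /Ka; repeat setoid_rewrite mulr_suml.
rewrite reo_I1 /PHa /Q1a; repeat setoid_rewrite mulr_sumr.
do 8 (apply: eq_bigr => ? _); ring.
Qed.

Lemma I2 : \sum_(i < n) \sum_(j < n) \sum_(k < n) \sum_(a < n) \sum_(b < n) \sum_(r < n)
   (G i a * Ka j b * G r k * T i j k * Tb a b r) = PHa Q1a.
Proof.
rewrite -I1; sw0; sw3.
apply: eq_bigr => x1 _; apply: eq_bigr => x2 _; apply: eq_bigr => x3 _.
apply: eq_bigr => x4 _; apply: eq_bigr => x5 _; apply: eq_bigr => x6 _.
rewrite (TA x1 x2 x3) (TbA x4 x5 x6); ring.
Qed.

Lemma I3 : \sum_(i < n) \sum_(j < n) \sum_(k < n) \sum_(a < n) \sum_(b < n) \sum_(r < n)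
   (G i a * G j b * Ka r k * T i j k * Tb a b r) = PHa Q2a.
Proof.
rewrite /Ka; repeat setoid_rewrite mulr_sumr; repeat setoid_rewrite mulr_suml.
rewrite reo_I3 /PHa /Q2a; repeat setoid_rewrite mulr_sumr.
do 8 (apply: eq_bigr => ? _); ring.
Qed.

Lemma I4 : \sum_(i < n) \sum_(j < n) \sum_(k < n) \sum_(a < n) \sum_(b < n) \sum_(r < n)
   (G i a * G j b * G r k * (\sum_(q < n) \sum_(l < n) G q l * T i j l * H q k) * Tb a b r)
   = PHa Q2a.
Proof.
repeat setoid_rewrite mulr_sumr; repeat setoid_rewrite mulr_suml.
rewrite reo_I4 /PHa /Q2a; repeat setoid_rewrite mulr_sumr.
do 8 (apply: eq_bigr => ? _); ring.
Qed.

Lemma I5 : \sum_(i < n) \sum_(j < n) \sum_(k < n) \sum_(a < n) \sum_(b < n) \sum_(r < n)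
   (G i a * G j b * G r k * T i j k * (\sum_(q < n) \sum_(l < n) G l q * Tb a b l * H r q))
   = PHa Q2a.
Proof.
repeat setoid_rewrite mulr_sumr.
rewrite reo_I5 /PHa /Q2a; repeat setoid_rewrite mulr_sumr.
do 8 (apply: eq_bigr => ? _); ring.
Qed.

Lemma N1 (Nb : I -> I -> I -> C) :
  \sum_(i < n) \sum_(j < n) \sum_(k < n) \sum_(a < n) \sum_(b < n) \sum_(r < n)
   (G i a * G j b * G r k * (Nb i j k - Nb j i k) * Tb a b r) =
  2%:R * \sum_(i < n) \sum_(j < n) \sum_(k < n) \sum_(l < n) \sum_(m < n) \sum_(a < n)
   (G i j * G k l * G m a * Nb i k a * Tb j l m).
Proof.
have E : \sum_(i < n) \sum_(j < n) \sum_(k < n) \sum_(a < n) \sum_(b < n) \sum_(r < n)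
   (G i a * G j b * G r k * (Nb i j k - Nb j i k) * Tb a b r) =
   \sum_(i < n) \sum_(j < n) \sum_(k < n) \sum_(a < n) \sum_(b < n) \sum_(r < n)
   (G i a * G j b * G r k * Nb i j k * Tb a b r) -
   \sum_(i < n) \sum_(j < n) \sum_(k < n) \sum_(a < n) \sum_(b < n) \sum_(r < n)
   (G i a * G j b * G r k * Nb j i k * Tb a b r).
  have mB1 : forall x y z w : C, x * (y - z) * w = x * y * w - x * z * w.
    by move=> *; ring.
  setoid_rewrite mB1.
  by repeat setoid_rewrite sumrB.
have E2 : \sum_(i < n) \sum_(j < n) \sum_(k < n) \sum_(a < n) \sum_(b < n) \sum_(r < n)
   (G i a * G j b * G r k * Nb j i k * Tb a b r) =
   \sum_(i < n) \sum_(j < n) \sum_(k < n) \sum_(a < n) \sum_(b < n) \sum_(r < n)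
   - (G i a * G j b * G r k * Nb i j k * Tb a b r).
  sw0; sw3.
  apply: eq_bigr => x1 _; apply: eq_bigr => x2 _; apply: eq_bigr => x3 _.
  apply: eq_bigr => x4 _; apply: eq_bigr => x5 _; apply: eq_bigr => x6 _.
  rewrite (TbA x4 x5 x6); ring.
rewrite E E2; repeat setoid_rewrite sumrN.
rewrite reo_N opprK; ring.
Qed.

Lemma N2 (Nb : I -> I -> I -> C) :
  \sum_(i < n) \sum_(j < n) \sum_(k < n) \sum_(a < n) \sum_(b < n) \sum_(r < n)
   (G i a * G j b * G r k * T i j k * (Nb a b r - Nb b a r)) =
  2%:R * \sum_(i < n) \sum_(j < n) \sum_(k < n) \sum_(l < n) \sum_(m < n) \sum_(a < n)
   (G i j * G k l * G m a * T i k a * Nb j l m).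
Proof.
have E : \sum_(i < n) \sum_(j < n) \sum_(k < n) \sum_(a < n) \sum_(b < n) \sum_(r < n)
   (G i a * G j b * G r k * T i j k * (Nb a b r - Nb b a r)) =
   \sum_(i < n) \sum_(j < n) \sum_(k < n) \sum_(a < n) \sum_(b < n) \sum_(r < n)
   (G i a * G j b * G r k * T i j k * Nb a b r) -
   \sum_(i < n) \sum_(j < n) \sum_(k < n) \sum_(a < n) \sum_(b < n) \sum_(r < n)
   (G i a * G j b * G r k * T i j k * Nb b a r).
  setoid_rewrite mulrBr.
  by repeat setoid_rewrite sumrB.
have E2 : \sum_(i < n) \sum_(j < n) \sum_(k < n) \sum_(a < n) \sum_(b < n) \sum_(r < n)
   (G i a * G j b * G r k * T i j k * Nb b a r) =
   \sum_(i < n) \sum_(j < n) \sum_(k < n) \sum_(a < n) \sum_(b < n) \sum_(r < n)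
   - (G i a * G j b * G r k * T i j k * Nb a b r).
  sw0; sw3.
  apply: eq_bigr => x1 _; apply: eq_bigr => x2 _; apply: eq_bigr => x3 _.
  apply: eq_bigr => x4 _; apply: eq_bigr => x5 _; apply: eq_bigr => x6 _.
  rewrite (TA x1 x2 x3); ring.
rewrite E E2; repeat setoid_rewrite sumrN.
rewrite reo_N opprK; ring.
Qed.


Definition N1R (Nb : I -> I -> I -> C) :=
  \sum_(i < n) \sum_(j < n) \sum_(k < n) \sum_(l < n) \sum_(m < n) \sum_(a < n)
   (G i j * G k l * G m a * Nb i k a * Tb j l m).
Definition N2R (Nb : I -> I -> I -> C) :=
  \sum_(i < n) \sum_(j < n) \sum_(k < n) \sum_(l < n) \sum_(m < n) \sum_(a < n)
   (G i j * G k l * G m a * T i k a * Nb j l m).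

Lemma I1n : \sum_(i < n) \sum_(j < n) \sum_(k < n) \sum_(a < n) \sum_(b < n) \sum_(r < n)
   ((- Ka i a) * G j b * G r k * T i j k * Tb a b r) = - PHa Q1a.
Proof. repeat setoid_rewrite mulNr; repeat setoid_rewrite sumrN; by rewrite I1. Qed.

Lemma I2n : \sum_(i < n) \sum_(j < n) \sum_(k < n) \sum_(a < n) \sum_(b < n) \sum_(r < n)
   (G i a * (- Ka j b) * G r k * T i j k * Tb a b r) = - PHa Q1a.
Proof.
setoid_rewrite mulrN; repeat setoid_rewrite mulNr; repeat setoid_rewrite sumrN; by rewrite I2.
Qed.

Lemma I3n : \sum_(i < n) \sum_(j < n) \sum_(k < n) \sum_(a < n) \sum_(b < n) \sum_(r < n)
   (G i a * G j b * (- Ka r k) * T i j k * Tb a b r) = - PHa Q2a.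
Proof.
setoid_rewrite mulrN; repeat setoid_rewrite mulNr; repeat setoid_rewrite sumrN; by rewrite I3.
Qed.

Lemma S4 (Xx Nb : I -> I -> I -> C) :
  (forall i j k, Xx i j k - Xx j i k = (Nb i j k - Nb j i k) +
     \sum_(q < n) \sum_(l < n) G q l * T i j l * H q k) ->
  \sum_(i < n) \sum_(j < n) \sum_(k < n) \sum_(a < n) \sum_(b < n) \sum_(r < n)
   (G i a * G j b * G r k * (Xx i j k - Xx j i k) * Tb a b r) = 2%:R * N1R Nb + PHa Q2a.
Proof.
move=> hx; setoid_rewrite hx.
have e : forall x y z u w : C, x * ((y - z) + u) * w = x * (y - z) * w + x * u * w.
  by move=> *; ring.
setoid_rewrite e; repeat setoid_rewrite sumrD'.
by rewrite N1 I4.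
Qed.

Lemma S5 (Zx Nb : I -> I -> I -> C) :
  (forall a b r, Zx a b r = (Nb a b r - Nb b a r) +
     \sum_(q < n) \sum_(l < n) G l q * Tb a b l * H r q) ->
  \sum_(i < n) \sum_(j < n) \sum_(k < n) \sum_(a < n) \sum_(b < n) \sum_(r < n)
   (G i a * G j b * G r k * T i j k * Zx a b r) = 2%:R * N2R Nb + PHa Q2a.
Proof.
move=> hx; setoid_rewrite hx.
have e : forall x y z u : C, x * ((y - z) + u) = x * (y - z) + x * u.
  by move=> *; ring.
setoid_rewrite e; repeat setoid_rewrite sumrD'.
by rewrite N2 I5.
Qed.

Lemma PN (Nb Nbb : I -> I -> I -> C) :
  \sum_(i < n) \sum_(j < n) \sum_(k < n) \sum_(l < n) \sum_(m < n) \sum_(a < n)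
   (G i j * G k l * G m a * (Nb i k a * Tb j l m + T i k a * Nbb j l m)) =
  N1R Nb + N2R Nbb.
Proof.
have e : forall x y z w u : C, x * (y * z + w * u) = x * y * z + x * w * u.
  by move=> *; ring.
setoid_rewrite e; repeat setoid_rewrite sumrD'.
by [].
Qed.

Lemma PHa_lin (c : C) (A B : I -> I -> C) :
  PHa (fun i j => c * A i j + B i j) = c * PHa A + PHa B.
Proof.
have e : forall x y z : C, x * (y + z) = x * y + x * z by move=> *; ring.
rewrite /PHa; cbv beta; setoid_rewrite e; repeat setoid_rewrite sumrD'.
congr (_ + _); repeat setoid_rewrite mulr_sumr.
do 4 (apply: eq_bigr => ? _); ring.
Qed.

End Alg.


Lemma prod5 (C : comRingType) (x1 x2 x3 x4 x5 d1 d2 d3 d4 d5 : C) :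
 (((d1 * x2 + x1 * d2) * x3 + x1 * x2 * d3) * x4 + x1 * x2 * x3 * d4) * x5 + x1 * x2 * x3 * x4 * d5
 = d1*x2*x3*x4*x5 + x1*d2*x3*x4*x5 + x1*x2*d3*x4*x5 + x1*x2*x3*d4*x5 + x1*x2*x3*x4*d5.
Proof. ring. Qed.

Section Main.
Variables (R : realType) (n : nat) (D : set (Pt R n)).
Variable (g : 'I_n -> 'I_n -> Pt R n -> R[i]).
Hypotheses (oD : open D) (Hg : smooth_hermitian_family D g).
Variable p : Pt R n.
Hypothesis Dp : D p.

Local Notation G := (ginv g p).
Local Notation H := (fun a b => hh g a b p).
Local Notation T := (fun i j k => Tor g i j k p).
Local Notation Tb := (fun i j k => Torb g i j k p).
Local Notation X := (Xt g p).

Lemma LHS_eq : ds (normT2 g) p =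
  \sum_(i < n) \sum_(j < n) \sum_(k < n) \sum_(a < n) \sum_(b < n) \sum_(r < n)
   ((- Ka G H i a) * G j b * G r k * T i j k * Tb a b r
    + G i a * (- Ka G H j b) * G r k * T i j k * Tb a b r
    + G i a * G j b * (- Ka G H r k) * T i j k * Tb a b r
    + G i a * G j b * G r k * (X i j k - X j i k) * Tb a b r
    + G i a * G j b * G r k * T i j k * conjc (X a b r - X b a r)).
Proof.
suff : DC (e_s R n) (normT2 g) p
  (\sum_(i < n) \sum_(j < n) \sum_(k < n) \sum_(a < n) \sum_(b < n) \sum_(r < n)
   ((- Ka G H i a) * G j b * G r k * T i j k * Tb a b r
    + G i a * (- Ka G H j b) * G r k * T i j k * Tb a b r
    + G i a * G j b * (- Ka G H r k) * T i j k * Tb a b r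
    + G i a * G j b * G r k * (X i j k - X j i k) * Tb a b r
    + G i a * G j b * G r k * T i j k * conjc (X a b r - X b a r))) by case.
apply: DC_sum => i; apply: DC_sum => j; apply: DC_sum => k.
apply: DC_sum => a; apply: DC_sum => b; apply: DC_sum => r.
have := DC_mul (DC_mul (DC_mul (DC_mul (DC_ginv oD Hg i a Dp) (DC_ginv oD Hg j b Dp))
   (DC_ginv oD Hg r k Dp)) (DC_Tor oD Hg i j k Dp)) (DC_Torb oD Hg a b r Dp).
move=> h; apply: DC_val h _.
exact: prod5.
Qed.


Lemma ginv_herm a b : conjc (G a b) = G b a.
Proof.
rewrite /ginv.
set M := \matrix_(a0, b0) g a0 b0 p.
have -> : conjc (invmx M b a) = (map_mx conjc (invmx M)) b a by rewrite mxE.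
rewrite map_invmx.
have -> : map_mx conjc M = M^T.
  by apply/matrixP => x y; rewrite !mxE (herm Hg x y Dp) conjcK.
by rewrite -trmx_inv mxE.
Qed.

Lemma abs4 (x y a b : R[i]) : x - y = (x - a) - (y - b) + (a - b).
Proof. by ring. Qed.

Lemma pw4 i j k : X i j k - X j i k = (nabh g i j k p - nabh g j i k p) +
  \sum_(q < n) \sum_(l < n) G q l * T i j l * H q k.
Proof.
have e : \sum_(q < n) \sum_(l < n) G q l * T i j l * H q k =
   \sum_(q < n) Gam g i j q p * hh g q k p - \sum_(q < n) Gam g j i q p * hh g q k p.
  rewrite -sumrB; apply: eq_bigr => q _; rewrite /Gam !mulr_suml -sumrB.
  apply: eq_bigr => l _; rewrite /Tor; cbv beta.
  by rewrite mulrBr mulrBl mulrA mulrA.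
rewrite e /nabh; exact: abs4.
Qed.

Lemma cj (x y z h : R[i]) : conjc x * conjc (y - z) * h = conjc (x * y) * h - conjc (x * z) * h.
Proof. rewrite rmorphB !rmorphM; ring. Qed.

Lemma pw5 a b r : conjc (X a b r - X b a r) = (nabhb g a b r p - nabhb g b a r p) +
  \sum_(q < n) \sum_(l < n) G l q * Tb a b l * H r q.
Proof.
have e : \sum_(q < n) \sum_(l < n) G l q * Tb a b l * H r q =
   \sum_(q < n) conjc (Gam g a b q p) * hh g r q p -
   \sum_(q < n) conjc (Gam g b a q p) * hh g r q p.
  rewrite -sumrB; apply: eq_bigr => q _; rewrite /Gam !rmorph_sum !mulr_suml -sumrB.
  apply: eq_bigr => l _; rewrite /Torb /Tor; cbv beta.
  rewrite -ginv_herm; exact: cj.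
rewrite e /nabhb (Xb_conj oD Hg a r b Dp) (Xb_conj oD Hg b r a Dp) rmorphB.
exact: abs4.
Qed.

Lemma TA0 i j k : T j i k = - T i j k.
Proof. by rewrite /Tor opprB. Qed.

Lemma TbA0 i j k : Tb j i k = - Tb i j k.
Proof. by rewrite /Torb TA0 rmorphN. Qed.

Lemma fin (a b c d : R[i]) :
  - a + - a + - b + (2%:R * c + b) + (2%:R * d + b) =
  (- 2%:R * a + b) + 4%:R * (2^-1 * (c + d)).
Proof.
have h2 : (2%:R : R[i]) != 0 by rewrite pnatr_eq0.
rewrite mulrA (_ : 4%:R * 2^-1 = 2%:R :> R[i]); first by ring.
by rewrite (_ : 4%:R = 2%:R * 2%:R :> R[i]) ?mulfK // -natrM.
Qed.

Lemma main_p : ds (normT2 g) p =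
      pair_h g (fun i j => - 2%:R * Q1 g i j p + Q2 g i j p) p
      + 4%:R * pair_nabh_T g p.
Proof.
rewrite LHS_eq.
repeat setoid_rewrite sumrD'.
have h1 := I1n G H T Tb; cbv beta in h1; rewrite h1; clear h1.
have h2 := @I2n _ _ G H T Tb TA0 TbA0; cbv beta in h2; rewrite h2; clear h2.
have h3 := I3n G H T Tb; cbv beta in h3; rewrite h3; clear h3.
have h4 := @S4 _ _ G H T Tb TbA0 X (fun i j k => nabh g i j k p) pw4.
cbv beta in h4; rewrite h4; clear h4.
have h5 := @S5 _ _ G H T Tb TA0 (fun a b r => conjc (X a b r - X b a r))
   (fun i j k => nabhb g i j k p) pw5.
cbv beta in h5; rewrite h5; clear h5.
have -> : pair_h g (fun i j => - 2%:R * Q1 g i j p + Q2 g i j p) p =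
   - 2%:R * PHa G H (Q1a G T Tb) + PHa G H (Q2a G T Tb)
  := PHa_lin G H (- 2%:R) (Q1a G T Tb) (Q2a G T Tb).
have -> : pair_nabh_T g p = 2^-1 * (N1R G Tb (fun i j k => nabh g i j k p) +
    N2R G T (fun i j k => nabhb g i j k p))
  := f_equal (fun x => 2^-1 * x) (PN G T Tb (fun i j k => nabh g i j k p)
       (fun i j k => nabhb g i j k p)).
exact: fin.
Qed.

End Main.

Unset Implicit Arguments.

Theorem lemma10p5 (R : realType) (n : nat) (D : set (Pt R n))
  (g : 'I_n -> 'I_n -> Pt R n -> R[i]) :
  open D -> smooth_hermitian_family D g ->
  forall p, D p ->
    ds (normT2 g) p =
      pair_h g (fun i j => - 2%:R * Q1 g i j p + Q2 g i j p) p
      + 4%:R * pair_nabh_T g p.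
Proof.
move=> oD Hg p Dp; exact: (main_p oD Hg Dp).
Qed.
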